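(* Let $A$ be an integral domain with field of fractions $K$, let $\mathcal P$ be a set of prime ideals of $A$, and let $B=\bigcap_{P\in\mathcal P}A_P$. The following are equivalent: (1) $B$ is a localization of $A$; (2) for every $x\in K\setminus A$ with $(A:_A x)\subseteq\bigcup_{P\in\mathcal P}P$, there is $P\in\mathcal P$ with $(A:_A x)\subseteq P$. Moreover, if each principal ideal of $A$ has only finitely many associated primes, then these are also equivalent to: (3) if $Q$ is an associated prime of a principal ideal of $A$ with $Q\subseteq\bigcup_{P\in\mathcal P}P$, then $Q\subseteq P$ for some $P\in\mathcal P$.
   Context: $(A:_A x)=\{a\in A: ax\in A\}$. An overring $B$ of $A$ is a localization of $A$ if $B=S^{-1}A$ for a multiplicatively closed set $S$ of nonzero elements of $A$. A prime $P$ of $A$ is an associated prime of an ideal $I$ if there is $a\in A$ such that $P$ is a minimal prime over $(I:_A a)=\{r\in A: ra\in I\}$. *)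

(* Defs.v *)
From HB Require Import structures.
From mathcomp Require Import all_boot all_order all_algebra.
From mathcomp Require Import boolp classical_sets cardinality.
Set Implicit Arguments. Unset Strict Implicit. Unset Printing Implicit Defensive.
Import GRing.Theory.
Local Open Scope ring_scope.
Local Open Scope classical_set_scope.

(* The integral domain A is represented as a subring of its field of
   fractions K (A : set K). *)
Section Defs.
Variable K : fieldType.

Definition subring (A : set K) : Prop :=
  A 1 /\ (forall x y, A x -> A y -> A (x - y)) /\
  (forall x y, A x -> A y -> A (x * y)).

Definition is_frac_field (A : set K) : Prop :=
  forall x, exists a b, [/\ A a, A b, b != 0 & x = a / b].

Definition ideal_of (A I : set K) : Prop :=
  [/\ I `<=` A, I 0, (forall x y, I x -> I y -> I (x + y))
    & (forall a x, A a -> I x -> I (a * x))].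

Definition prime_ideal (A P : set K) : Prop :=
  [/\ ideal_of A P, ~ P 1
    & (forall a b, A a -> A b -> P (a * b) -> P a \/ P b)].

Definition loc_at (A P : set K) : set K :=
  [set x | exists a s, [/\ A a, A s, ~ P s & x = a / s]].

Definition loc_by (A S : set K) : set K :=
  [set x | exists a s, [/\ A a, S s & x = a / s]].

Definition mult_closed_nonzero (A S : set K) : Prop :=
  [/\ S `<=` A, (forall s, S s -> s != 0), S 1
    & (forall s t, S s -> S t -> S (s * t))].

Definition is_localization (A B : set K) : Prop :=
  exists S, mult_closed_nonzero A S /\ B = loc_by A S.

Definition conductor (A : set K) (x : K) : set K :=
  [set a | A a /\ A (a * x)].

Definition colon_ideal (A I : set K) (a : K) : set K :=
  [set r | A r /\ I (r * a)].

Definition minimal_prime_over (A J P : set K) : Prop :=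
  [/\ prime_ideal A P, J `<=` P
    & (forall Q, prime_ideal A Q -> J `<=` Q -> Q `<=` P -> P `<=` Q)].

Definition assoc_prime (A I P : set K) : Prop :=
  exists a, A a /\ minimal_prime_over A (colon_ideal A I a) P.

Definition principal_ideal (A : set K) (a : K) : set K :=
  [set a * r | r in A].

End Defs.

(* Main.v *)
Require Import Defs.
From HB Require Import structures.
From mathcomp Require Import all_boot all_order all_algebra.
From mathcomp Require Import boolp classical_sets cardinality.
From mathcomp Require Import ring.
Set Implicit Arguments. Unset Strict Implicit. Unset Printing Implicit Defensive.
Import GRing.Theory.
Local Open Scope ring_scope.
Local Open Scope classical_set_scope.

Section Basics.
Variables (K : fieldType) (A : set K).
Hypothesis hA : subring A.

Lemma A1 : A 1. Proof. by case: hA. Qed.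
Lemma AB x y : A x -> A y -> A (x - y). Proof. by case: hA => _ [H _]; apply: H. Qed.
Lemma AM x y : A x -> A y -> A (x * y). Proof. by case: hA => _ [_ H]; apply: H. Qed.
Lemma A0 : A 0. Proof. by rewrite -(subrr 1); apply: AB; exact: A1. Qed.
Lemma AN x : A x -> A (- x). Proof. by move=> Ax; rewrite -sub0r; apply: AB => //; exact: A0. Qed.
Lemma AD x y : A x -> A y -> A (x + y).
Proof. by move=> Ax Ay; rewrite -(opprK y); apply: AB => //; exact: AN. Qed.
Lemma AX x n : A x -> A (x ^+ n).
Proof. by move=> Ax; elim: n => [|n IH]; rewrite ?expr0 ?exprS; [exact: A1|exact: AM]. Qed.

Section Ideal.
Variable I : set K.
Hypothesis hI : ideal_of A I.
Lemma IA x : I x -> A x. Proof. by case: hI => H _ _ _; apply: H. Qed.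
Lemma I0 : I 0. Proof. by case: hI. Qed.
Lemma ID x y : I x -> I y -> I (x + y). Proof. by case: hI => _ _ H _; apply: H. Qed.
Lemma IM a x : A a -> I x -> I (a * x). Proof. by case: hI => _ _ _ H; apply: H. Qed.
Lemma IMr a x : I x -> A a -> I (x * a). Proof. by move=> Ix Aa; rewrite mulrC; exact: IM. Qed.
End Ideal.

Lemma prime_ideal_ideal P : prime_ideal A P -> ideal_of A P. Proof. by case. Qed.
Lemma prime_not1 P : prime_ideal A P -> ~ P 1. Proof. by case. Qed.
Lemma primeP P a b : prime_ideal A P -> A a -> A b -> P (a * b) -> P a \/ P b.
Proof. by case=> _ _ H; apply: H. Qed.
Lemma prime_pow P s n : prime_ideal A P -> A s -> ~ P s -> ~ P (s ^+ n).
Proof.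
move=> hP As nPs; elim: n => [|n IH]; first by rewrite expr0; exact: prime_not1.
rewrite exprS => /(primeP hP As (AX n As)); tauto.
Qed.
Lemma prime_nz P s : prime_ideal A P -> ~ P s -> s != 0.
Proof. by move=> hP nPs; apply/eqP => s0; apply: nPs; rewrite s0; exact: (I0 (prime_ideal_ideal hP)). Qed.

Lemma Z1 (I T : set K) : ideal_of A I -> T `<=` A -> T 1 ->
  (forall s t, T s -> T t -> T (s * t)) -> (forall t, T t -> ~ I t) ->
  exists M, [/\ prime_ideal A M, I `<=` M & forall t, T t -> ~ M t].
Proof.
move=> hI TA T1 TM TI.
pose Pr := fun J : set K => J = set0 \/ [/\ ideal_of A J, I `<=` J & forall t, T t -> ~ J t].
have [M [PM Mmax]] : exists M, Pr M /\ forall B, M `<` B -> ~ Pr B.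
  apply: Zorn_bigcup => F FP Ftot.
  have HJ : forall J x, F J -> J x -> [/\ ideal_of A J, I `<=` J & forall t, T t -> ~ J t].
    move=> J x FJ Jx; case: (FP J FJ) => // J0; by rewrite J0 in Jx.
  have [[J0 [x0 FJ0 J0x]]|none] := pselect (exists J, exists2 x, F J & J x); last first.
    left; apply/seteqP; split=> // x [J FJ Jx]; apply: none; by exists J, x.
  have [J0i IJ0 _] := HJ _ _ FJ0 J0x.
  right; split.
  - split.
    + move=> x [J FJ Jx]; have [Ji _ _] := HJ _ _ FJ Jx; exact: (IA Ji).
    + by exists J0 => //; exact: (I0 J0i).
    + move=> x y [J1 FJ1 J1x] [J2 FJ2 J2y].
      have [Ji1 _ _] := HJ _ _ FJ1 J1x; have [Ji2 _ _] := HJ _ _ FJ2 J2y.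
      case: (Ftot _ _ FJ1 FJ2) => sub.
      * by exists J2 => //; apply: (ID Ji2) => //; exact: sub.
      * by exists J1 => //; apply: (ID Ji1) => //; exact: sub.
    + move=> a x Aa [J FJ Jx]; have [Ji _ _] := HJ _ _ FJ Jx.
      by exists J => //; exact: (IM Ji).
  - by move=> x Ix; exists J0 => //; exact: IJ0.
  - move=> t Tt [J FJ Jt]; have [_ _ JT] := HJ _ _ FJ Jt; exact: JT Tt Jt.
have Pr_I : Pr I by right; split.
case: PM => [M0|[Mi IsubM MT]].
  exfalso; apply: (Mmax I _ Pr_I); rewrite M0; split => // sub.
  by have := sub 0 (I0 hI).
exists M; split => //; split => //; first by apply: MT; exact: T1.
move=> a b Aa Ab Mab; apply: contrapT => /not_orP[nMa nMb].
have ext : forall c, A c -> ~ M c -> exists m r, [/\ M m, A r & T (m + c * r)].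
  move=> c Ac nMc.
  pose Jc := [set z | exists m r, [/\ M m, A r & z = m + c * r]].
  have MJ : M `<=` Jc by move=> m Mm; exists m, 0; split => //; [exact: A0|by rewrite mulr0 addr0].
  have Jcc : Jc c by exists 0, 1; split; [exact: (I0 Mi)|exact: A1|by rewrite add0r mulr1].
  have : ~ Pr Jc by apply: Mmax; split => // sub; exact: nMc (sub _ Jcc).
  move=> nPr; apply: contrapT => none; apply: nPr; right; split.
  - split.
    + move=> _ [m [r [Mm Ar ->]]]; apply: AD; [exact: (IA Mi)|exact: AM].
    + by apply: MJ; exact: (I0 Mi).
    + move=> _ _ [m1 [r1 [Mm1 Ar1 ->]]] [m2 [r2 [Mm2 Ar2 ->]]].
      exists (m1 + m2), (r1 + r2); split; [exact: (ID Mi)|exact: AD|ring].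
    + move=> d _ Ad [m [r [Mm Ar ->]]].
      exists (d * m), (d * r); split; [exact: (IM Mi)|exact: AM|ring].
  - by move=> x Ix; apply: MJ; exact: IsubM.
  - move=> t Tt [m [r [Mm Ar tE]]]; apply: none; exists m, r; split => //; by rewrite -tE.
have [m1 [r1 [Mm1 Ar1 T1']]] := ext a Aa nMa.
have [m2 [r2 [Mm2 Ar2 T2']]] := ext b Ab nMb.
apply: (MT _ (TM _ _ T1' T2')).
have -> : (m1 + a * r1) * (m2 + b * r2) =
  ((m2 + b * r2) * m1 + (a * r1) * m2) + (r1 * r2) * (a * b) by ring.
apply: (ID Mi); [apply: (ID Mi)|].
- apply: (IM Mi) => //; exact: TA.
- by apply: (IM Mi) => //; exact: AM.
- by apply: (IM Mi) => //; exact: AM.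
Qed.


Lemma Z2 (I P : set K) : I `<=` P -> prime_ideal A P ->
  exists Q, minimal_prime_over A I Q /\ Q `<=` P.
Proof.
move=> IP hP.
pose Pr := fun C : set K => C = set0 \/
  exists Q, [/\ prime_ideal A Q, I `<=` Q, Q `<=` P & C = ~` Q].
have [M [PM Mmax]] : exists M, Pr M /\ forall B, M `<` B -> ~ Pr B.
  apply: Zorn_bigcup => F FP Ftot.
  have HC : forall C x, F C -> C x ->
      exists Q, [/\ prime_ideal A Q, I `<=` Q, Q `<=` P & C = ~` Q].
    move=> C x FC Cx; case: (FP C FC) => // C0; by rewrite C0 in Cx.
  have [[C0 [x0 FC0 C0x]]|none] := pselect (exists C, exists2 x, F C & C x); last first.
    left; apply/seteqP; split=> // x [C FC Cx]; apply: none; by exists C, x.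
  have [Q0 [Q0p IQ0 Q0P C0E]] := HC _ _ FC0 C0x.
  pose Qi := [set x | forall C, F C -> ~ C x].
  have QiE : forall x Q C, Qi x -> F C -> prime_ideal A Q -> C = ~` Q -> Q x.
    move=> x Q C Qix FC _ CE; apply: contrapT => nQ; apply: (Qix C FC); by rewrite CE.
  have allQ : forall x, (forall Q, prime_ideal A Q -> I `<=` Q -> Q x) -> Qi x.
    move=> x hx C FC Cx; have [Q [Qp IQ _ CE]] := HC _ _ FC Cx.
    by move: Cx; rewrite CE; apply; exact: hx.
  have QiQ0 : Qi `<=` Q0 by move=> x Qix; exact: QiE Qix FC0 Q0p C0E.
  right; exists Qi; split.
  - split; [split|..].
    + move=> x /QiQ0; exact: (IA (prime_ideal_ideal Q0p)).
    + by apply: allQ => Q Qp _; exact: (I0 (prime_ideal_ideal Qp)).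
    + move=> x y Qix Qiy C FC Cxy; have [Q [Qp IQ _ CE]] := HC _ _ FC Cxy.
      move: Cxy; rewrite CE; apply; apply: (ID (prime_ideal_ideal Qp)).
      * exact: QiE Qix FC Qp CE.
      * exact: QiE Qiy FC Qp CE.
    + move=> a x Aa Qix C FC Cax; have [Q [Qp IQ _ CE]] := HC _ _ FC Cax.
      move: Cax; rewrite CE; apply; apply: (IM (prime_ideal_ideal Qp)) => //.
      exact: QiE Qix FC Qp CE.
    + by move=> /QiQ0; exact: prime_not1.
    + move=> a b Aa Ab Qiab; apply: contrapT => /not_orP[nQa nQb].
      move: nQa => /existsNP[C1 /not_implyP[FC1 /contrapT C1a]].
      move: nQb => /existsNP[C2 /not_implyP[FC2 /contrapT C2b]].
      have [Q1 [Q1p _ _ C1E]] := HC _ _ FC1 C1a.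
      have [Q2 [Q2p _ _ C2E]] := HC _ _ FC2 C2b.
      have Q1ab := QiE _ _ _ Qiab FC1 Q1p C1E.
      have Q2ab := QiE _ _ _ Qiab FC2 Q2p C2E.
      have Q1b : Q1 b.
        case: (primeP Q1p Aa Ab Q1ab) => // Q1a; by move: C1a; rewrite C1E.
      have Q2a : Q2 a.
        case: (primeP Q2p Aa Ab Q2ab) => // Q2b; by move: C2b; rewrite C2E.
      case: (Ftot _ _ FC1 FC2) => sub.
      * by have := sub _ C1a; rewrite C2E.
      * by have := sub _ C2b; rewrite C1E.
  - by move=> x Ix; apply: allQ => Q _; apply.
  - by move=> x /QiQ0; exact: Q0P.
  - apply/seteqP; split.
    + move=> x [C FC Cx] Qix; exact: Qix C FC Cx.
    + move=> x /existsNP[C /not_implyP[FC /contrapT Cx]]; by exists C.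
have PrP : Pr (~` P) by right; exists P; split.
case: PM => [M0|[Q0 [Q0p IQ0 Q0P ME]]].
  exfalso; apply: (Mmax (~` P) _ PrP); rewrite M0; split => // sub.
  by have := sub 1 (prime_not1 hP).
exists Q0; split => //; split => // Q' Q'p IQ' Q'Q0.
apply: contrapT => nsub.
apply: (Mmax (~` Q')); last by right; exists Q'; split => //; exact: subset_trans Q'Q0 Q0P.
rewrite ME; split; first exact: subsetC.
by move=> sub; apply: nsub => x Q0x; apply: contrapT => nQ'x; exact: sub x nQ'x Q0x.
Qed.

Lemma minprimeF (J Q : set K) q : ideal_of A J -> minimal_prime_over A J Q -> Q q ->
  exists u k, [/\ A u, ~ Q u & J (u * q ^+ k)].
Proof.
move=> hJ [Qp JQ Qmin] Qq.
have Aq : A q := IA (prime_ideal_ideal Qp) Qq.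
apply: contrapT => none.
pose T := [set t | exists u k, [/\ A u, ~ Q u & t = u * q ^+ k]].
have [M [Mp JM MT]] : exists M, [/\ prime_ideal A M, J `<=` M & forall t, T t -> ~ M t].
  apply: Z1 => //.
  - by move=> _ [u [k [Au _ ->]]]; apply: AM => //; exact: AX.
  - by exists 1, 0%N; split; [exact: A1|exact: prime_not1|rewrite expr0 mulr1].
  - move=> _ _ [u1 [k1 [Au1 nQ1 ->]]] [u2 [k2 [Au2 nQ2 ->]]].
    exists (u1 * u2), (k1 + k2)%N; split; first exact: AM.
    + by case/(primeP Qp Au1 Au2).
    + by rewrite exprD; ring.
  - move=> _ [u [k [Au nQu ->]]] Jt; apply: none; by exists u, k.
have MQ : M `<=` Q.
  move=> m Mm; apply: contrapT => nQm; apply: (MT m) => //.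
  exists m, 0%N; split => //; first exact: (IA (prime_ideal_ideal Mp)).
  by rewrite expr0 mulr1.
have := Qmin M Mp JM MQ q Qq; apply: MT.
exists 1, 1%N; split; [exact: A1|exact: prime_not1|by rewrite expr1 mul1r].
Qed.

End Basics.

Section Main.
Variables (K : fieldType) (A : set K).
Hypothesis hA : subring A.

Lemma cond_ideal x : ideal_of A (conductor A x).
Proof.
split.
- by move=> r [].
- by split; rewrite ?mul0r; exact: A0.
- move=> r t [Ar Arx] [At Atx]; split; first exact: AD.
  by rewrite mulrDl; exact: AD.
- move=> c r Ac [Ar Arx]; split; first exact: AM.
  by rewrite -mulrA; exact: AM.
Qed.

Lemma loc_cond P x : prime_ideal A P -> loc_at A P x -> exists t, [/\ A t, A (t * x) & ~ P t].
Proof.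
move=> hP [a [s [Aa As nPs ->]]]; exists s; split => //.
by rewrite mulrC mulfVK //; exact: (prime_nz hP).
Qed.

Lemma cond_loc P x t : prime_ideal A P -> A t -> A (t * x) -> ~ P t -> loc_at A P x.
Proof.
move=> hP At Atx nPt; exists (t * x), t; split => //.
by rewrite [t * x]mulrC mulfK //; exact: (prime_nz hP).
Qed.

Lemma colon_cond a b : a != 0 ->
  colon_ideal A (principal_ideal A a) b = conductor A (b / a).
Proof.
move=> an; apply/seteqP; split => r [Ar H]; split => //.
- case: H => r' Ar' E.
  by have -> : r * (b / a) = r' by rewrite mulrA -E [a * r']mulrC mulfK.
- exists (r * (b / a)) => //.
  by rewrite mulrCA; congr (_ * _); rewrite mulrCA mulfV // mulr1.
Qed.

Lemma inv_eq (s t c : K) : s != 0 -> t != 0 -> 1 / s = c / t -> t = c * s.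
Proof.
move=> sn tn E.
have -> : t = (1 / s) * (s * t) by rewrite mul1r mulrA mulVf // mul1r.
by rewrite E [s * t]mulrC mulrA divfK.
Qed.

Lemma list_prod (Q : set K) (l : seq (set K)) : prime_ideal A Q ->
  (forall Q', Q' \in l -> prime_ideal A Q') ->
  exists s, [/\ A s, ~ Q s & forall Q', Q' \in l -> ~ Q' `<=` Q -> Q' s].
Proof.
move=> Qp; elim: l => [|Q0 l IH] hl.
  exists 1; split; first exact: A1; first exact: (prime_not1 Qp). by [].
have [s [As nQs Hs]] : exists s, [/\ A s, ~ Q s & forall Q', Q' \in l -> ~ Q' `<=` Q -> Q' s].
  by apply: IH => Q' Q'l; apply: hl; rewrite in_cons Q'l orbT.
have Q0p : prime_ideal A Q0 by apply: hl; rewrite in_cons eqxx.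
have [sub|nsub] := pselect (Q0 `<=` Q).
  exists s; split => // Q'; rewrite in_cons => /orP[/eqP ->|Q'l] //; exact: Hs.
move: nsub => /existsNP[u /not_implyP[Q0u nQu]].
have Au : A u := IA (prime_ideal_ideal Q0p) Q0u.
exists (s * u); split; first exact: AM.
  by case/(primeP Qp As Au).
move=> Q'; rewrite in_cons => /orP[/eqP ->|Q'l] ns.
  exact: (IM (prime_ideal_ideal Q0p)).
have Q'p : prime_ideal A Q' by apply: hl; rewrite in_cons Q'l orbT.
by apply: (IMr (prime_ideal_ideal Q'p)) => //; exact: Hs.
Qed.

End Main.

Lemma list_event (T : eqType) (l : seq T) (Pr : T -> nat -> Prop) :
  (forall x, x \in l -> exists n, forall m, (n <= m)%N -> Pr x m) ->
  exists N, forall x m, x \in l -> (N <= m)%N -> Pr x m.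
Proof.
elim: l => [|x0 l IH] hl; first by exists 0%N.
have [N HN] : exists N, forall x m, x \in l -> (N <= m)%N -> Pr x m.
  by apply: IH => x xl; apply: hl; rewrite in_cons xl orbT.
have [n0 Hn0] := hl x0 (mem_head _ _).
exists (maxn n0 N) => x m; rewrite in_cons => /orP[/eqP ->|xl] hm.
  by apply: Hn0; exact: leq_trans (leq_maxl _ _) hm.
by apply: HN => //; exact: leq_trans (leq_maxr _ _) hm.
Qed.

Unset Implicit Arguments.

Theorem theorem2p4 (K : fieldType) (A : set K) (PP : set (set K)) :
  subring A -> is_frac_field A ->
  (forall P, PP P -> prime_ideal A P) ->
  let B := \bigcap_(P in PP) loc_at A P in
  (is_localization A B <->
     (forall x, ~ A x -> conductor A x `<=` \bigcup_(P in PP) P ->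
        exists2 P, PP P & conductor A x `<=` P)) /\
  ((forall a, A a -> finite_set (assoc_prime A (principal_ideal A a))) ->
   (is_localization A B <->
     (forall a Q, A a -> assoc_prime A (principal_ideal A a) Q ->
        Q `<=` \bigcup_(P in PP) P -> exists2 P, PP P & Q `<=` P))).
Proof.
move=> hA hF hPP B.
set U := \bigcup_(P in PP) P.
have h12 : is_localization A B -> (forall x, ~ A x -> conductor A x `<=` U ->
        exists2 P, PP P & conductor A x `<=` P).
  move=> [S [[SA Snz S1 SM] BE]] x nAx condU.
  apply: contrapT => nex.
  have hn : forall P, PP P -> ~ (conductor A x `<=` P).
    by move=> P PPP sub; apply: nex; exists P.
  have Bx : B x.
    move=> P PPP; have := hn P PPP.
    move=> /existsNP[t /not_implyP[[At Atx] nPt]].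
    exact: (cond_loc (hPP P PPP) At Atx nPt).
  rewrite BE in Bx; case: Bx => c [s [Ac Ss xE]].
  have sn := Snz s Ss.
  have condS : conductor A x s.
    split; first exact: SA.
    by rewrite xE mulrC divfK.
  have [P PPP Ps] := condU s condS.
  have Binv : B (1 / s) by rewrite BE; exists 1, s; split => //; exact: (A1 hA).
  have [c' [t [Ac' At nPt invE]]] := Binv P PPP.
  have tE := inv_eq sn (prime_nz (hPP P PPP) nPt) invE.
  by apply: nPt; rewrite tE; exact: (IM (prime_ideal_ideal (hPP P PPP))).
have h21 : (forall x, ~ A x -> conductor A x `<=` U ->
        exists2 P, PP P & conductor A x `<=` P) -> is_localization A B.
  move=> h2.
  exists [set s | [/\ A s, s != 0 & ~ U s]]; split.
    split.
    - by move=> s [].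
    - by move=> s [].
    - split; [exact: (A1 hA)|exact: oner_neq0|].
      by move=> [P PPP P1]; exact: (prime_not1 (hPP P PPP)).
    - move=> s t [As sn nUs] [At tn nUt]; split; first exact: (AM hA).
      + by rewrite mulf_neq0.
      + move=> [P PPP Pst]; case: (primeP (hPP P PPP) As At Pst) => HP.
        * by apply: nUs; exists P.
        * by apply: nUt; exists P.
  apply/seteqP; split.
  - move=> x Bx.
    have [Ax|nAx] := pselect (A x).
      exists x, 1; split => //; last by rewrite divr1.
      split; [exact: (A1 hA)|exact: oner_neq0|].
      by move=> [P PPP P1]; exact: (prime_not1 (hPP P PPP)).
    have [[P0 PP0]|none] := pselect (exists P, PP P); last first.
      have [a [b [Aa Ab bn xE]]] := hF x.
      exists a, b; split => //; split => //.
      by move=> [P PPP _]; apply: none; exists P.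
    have nsub : ~ (conductor A x `<=` U).
      move=> sub; have [P PPP sub'] := h2 x nAx sub.
      have [t [At Atx nPt]] := loc_cond (hPP P PPP) (Bx P PPP).
      by apply: nPt; apply: sub'.
    move: nsub => /existsNP[s /not_implyP[[As Asx] nUs]].
    have sn : s != 0.
      apply/eqP => s0; apply: nUs; exists P0 => //; rewrite s0.
      exact: (I0 (prime_ideal_ideal (hPP P0 PP0))).
    exists (s * x), s; split => //; by rewrite [s * x]mulrC mulfK.
  - move=> _ [a [s [Aa [As sn nUs] ->]]] P PPP.
    exists a, s; split => // Ps; apply: nUs; by exists P.
have h32 : (forall a Q, A a -> assoc_prime A (principal_ideal A a) Q ->
        Q `<=` U -> exists2 P, PP P & Q `<=` P) ->
      (forall x, ~ A x -> conductor A x `<=` U ->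
        exists2 P, PP P & conductor A x `<=` P).
  move=> h3 x nAx condU.
  have [n [d [An Ad dn xE]]] := hF x.
  have [M [Mp condM MT]] : exists M, [/\ prime_ideal A M, conductor A x `<=` M &
      forall t, [set s | A s /\ ~ U s] t -> ~ M t].
    apply: (Z1 hA (cond_ideal hA x)).
    - by move=> s [].
    - split; first exact: (A1 hA).
      by move=> [P PPP P1]; exact: (prime_not1 (hPP P PPP)).
    - move=> s t [As nUs] [At nUt]; split; first exact: (AM hA).
      move=> [P PPP Pst]; case: (primeP (hPP P PPP) As At Pst) => HP.
      * by apply: nUs; exists P.
      * by apply: nUt; exists P.
    - by move=> t [At nUt] ct; apply: nUt; exact: condU.
  have MU : M `<=` U.
    move=> m Mm; apply: contrapT => nUm; apply: (MT m) => //; split => //.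
    exact: (IA (prime_ideal_ideal Mp)).
  have [Q [Qmin QM]] := Z2 condM Mp.
  have [P PPP QP] : exists2 P, PP P & Q `<=` P.
    apply: (h3 d) => //; last exact: subset_trans QM MU.
    by exists n; split => //; rewrite colon_cond // -xE.
  exists P => //; case: Qmin => _ cQ _; exact: subset_trans cQ QP.
have h23 : (forall a, A a -> finite_set (assoc_prime A (principal_ideal A a))) ->
      (forall x, ~ A x -> conductor A x `<=` U ->
        exists2 P, PP P & conductor A x `<=` P) ->
      (forall a Q, A a -> assoc_prime A (principal_ideal A a) Q ->
        Q `<=` U -> exists2 P, PP P & Q `<=` P).
  move=> hfin h2 a Q Aa [b [Ab hmin]] QU.
  have [a0|an] := eqVneq a 0.
    case: hmin => Qp JQ Qmin; subst a.
    have Z0p : prime_ideal A [set 0].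
      split; [split|..].
      + by move=> x ->; exact: (A0 hA).
      + by [].
      + by move=> x y -> ->; rewrite addr0.
      + by move=> c x _ ->; rewrite mulr0.
      + by move=> /eqP; rewrite oner_eq0.
      + move=> x y _ _ /eqP; rewrite mulf_eq0 => /orP[/eqP ->|/eqP ->]; by [left|right].
    have [b0|bn] := eqVneq b 0.
      exfalso; apply: (prime_not1 Qp); apply: JQ; split; first exact: (A1 hA).
      by exists 0; [exact: (A0 hA)|rewrite b0 mul0r mulr0].
    have JZ : colon_ideal A (principal_ideal A 0) b `<=` [set 0].
      move=> r [Ar [r' _ E]]; move: E; rewrite mul0r => /esym/eqP.
      by rewrite mulf_eq0 (negbTE bn) orbF => /eqP.
    have Q0 : Q 0 := I0 (prime_ideal_ideal Qp).
    have QZ := Qmin _ Z0p JZ (fun x (hx : [set 0] x) => eq_ind_r Q Q0 hx).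
    have [P PPP P0] := QU 0 Q0.
    exists P => // x /QZ ->; exact: P0.
  rewrite colon_cond // in hmin; set x := b / a in hmin.
  case: hmin => Qp cQ Qmin.
  have [Fs FE] := (finite_fsetP).1 (hfin a Aa).
  have Fsp : forall Q', Q' \in (finmap.enum_fset Fs) -> prime_ideal A Q'.
    move=> Q' Q'F; have : assoc_prime A (principal_ideal A a) Q' by rewrite FE.
    by case=> c [_ []].
  have [s [As nQs Hs]] := list_prod hA Qp Fsp.
  pose y m := s ^+ m * x.
  have mono : forall m m', (m <= m')%N -> conductor A (y m) `<=` conductor A (y m').
    move=> m m' le r [Ar Ary]; split => //.
    have e : s ^+ m' = s ^+ (m' - m) * s ^+ m by rewrite -exprD subnK.
    have -> : r * y m' = s ^+ (m' - m) * (r * y m) by rewrite /y e; ring.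
    exact: (AM hA (AX hA _ As) Ary).
  have cx : forall m, conductor A x `<=` conductor A (y m).
    move=> m r [Ar Arx]; split => //.
    have -> : r * y m = s ^+ m * (r * x) by rewrite /y; ring.
    exact: (AM hA (AX hA _ As) Arx).
  have cQm : forall m, conductor A (y m) `<=` Q.
    move=> m r [Ar Ary].
    have : Q (r * s ^+ m).
      apply: cQ; split; first exact: (AM hA Ar (AX hA m As)).
      by have -> : r * s ^+ m * x = r * y m by rewrite /y; ring.
    case/(primeP Qp Ar (AX hA m As)) => // Qsm; exfalso.
    exact: (prime_pow hA Qp As nQs Qsm).
  pose Pr := fun Q' m => ~ Q' `<=` Q -> ~ minimal_prime_over A (conductor A (y m)) Q'.
  have [N HN] : exists N, forall Q' m, Q' \in (finmap.enum_fset Fs) -> (N <= m)%N -> Pr Q' m.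
    apply: list_event => Q' Q'F.
    have [sub|nsub] := pselect (Q' `<=` Q).
      by exists 0%N => m _ ns; exfalso; exact: ns sub.
    have Q's := Hs Q' Q'F nsub.
    have [[n mn]|none] := pselect (exists n, minimal_prime_over A (conductor A (y n)) Q').
      have [u [k [Au nQ'u [_ Auk]]]] := minprimeF hA (cond_ideal hA (y n)) mn Q's.
      exists (n + k)%N => m le _ mm; case: mm => _ cQ' _.
      apply: nQ'u; apply: cQ'; apply: (mono (n + k)%N m le); split => //.
      by have -> : u * y (n + k)%N = u * s ^+ k * y n by rewrite /y exprD; ring.
    by exists 0%N => m _ _ mm; apply: none; exists m.
  have nAy : ~ A (y N).
    move=> Ay; apply: (prime_not1 Qp); apply: (cQm N); split; first exact: (A1 hA).
    by rewrite mul1r.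
  have [P PPP cP] := h2 (y N) nAy (subset_trans (cQm N) QU).
  have [Q' [mQ' Q'P]] := Z2 cP (hPP P PPP).
  have Q'F : Q' \in (finmap.enum_fset Fs).
    have : assoc_prime A (principal_ideal A a) Q'.
      exists (s ^+ N * b); split; first exact: (AM hA (AX hA N As) Ab).
      by rewrite colon_cond // -mulrA.
    by rewrite FE.
  have Q'Q : Q' `<=` Q.
    by apply: contrapT => ns; exact: (HN Q' N Q'F (leqnn N) ns mQ').
  exists P => //; case: mQ' => Q'p cQ' _.
  have QQ' := Qmin Q' Q'p (subset_trans (cx N) cQ') Q'Q.
  exact: subset_trans QQ' Q'P.
split; first by split.
move=> hfin; split.
- by move=> /h12; exact: h23.
- by move=> /h32; exact: h21.
Qed.
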